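(* Let $S$ be a countable discrete inverse semigroup that satisfies the F\o lner condition but not the proper F\o lner condition. Then $S$ has a minimal projection.
   Context: Inverse semigroup: each $s$ has a unique $s^*$ with $ss^*s=s$, $s^*ss^*=s^*$; projections are elements of $E(S)=\{s^*s\}$, ordered by $e\le f\iff ef=e$; $e_0\in E(S)$ is minimal if $f\le e_0$ implies $f=e_0$. $S$ satisfies the F\o lner condition if for every $\varepsilon>0$ and finite $\mathcal F\subseteq S$ there is a finite non-empty $F\subseteq S$ with $|sF\cup F|\le(1+\varepsilon)|F|$ for all $s\in\mathcal F$; it satisfies the proper F\o lner condition if in addition, for any finite $A\subseteq S$, $F$ can be chosen with $A\subseteq F$. *)

(* Defs.v *)
From mathcomp Require Import all_boot all_order all_algebra.
Set Implicit Arguments. Unset Strict Implicit. Unset Printing Implicit Defensive.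
Import Order.TTheory GRing.Theory Num.Theory.

Section InvSemigroup.
Variables (S : countType) (mul : S -> S -> S).

Definition is_inverse (s t : S) : Prop :=
  mul (mul s t) s = s /\ mul (mul t s) t = t.

Definition inverse_semigroup : Prop :=
  (forall a b c, mul a (mul b c) = mul (mul a b) c) /\
  (forall s, exists! t, is_inverse s t).

Definition is_projection (e : S) : Prop :=
  exists s t, is_inverse s t /\ e = mul t s.

Definition proj_le (e f : S) : Prop := mul e f = e.

Definition minimal_projection (e0 : S) : Prop :=
  is_projection e0 /\ forall f, is_projection f -> proj_le f e0 -> f = e0.

(* |sF ∪ F| for a finite set F represented by a duplicate-free list *)
Definition card_sF_U_F (s : S) (F : seq S) : nat :=
  size (undup (map (mul s) F ++ F)).

Definition folner_set (eps : rat) (calF F : seq S) : Prop :=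
  uniq F /\ F <> [::] /\
  forall s, s \in calF -> ((card_sF_U_F s F)%:R <= (1 + eps) * (size F)%:R :> rat)%R.

Definition folner_condition : Prop :=
  forall (eps : rat), (0 < eps)%R -> forall calF : seq S,
    exists F : seq S, folner_set eps calF F.

Definition proper_folner_condition : Prop :=
  forall (eps : rat), (0 < eps)%R -> forall (calF A : seq S),
    exists F : seq S, folner_set eps calF F /\ {subset A <= F}.

End InvSemigroup.

(* Main.v *)
Require Import Defs.
From mathcomp Require Import all_boot all_order all_algebra.
From mathcomp Require Import lra.
From Stdlib Require Import Classical.

Lemma inv_uniq {S : countType} {mul : S -> S -> S} :
  (forall s, exists! t, is_inverse mul s t) ->
  forall a b c, is_inverse mul a b -> is_inverse mul a c -> b = c.
Proof.
move=> HU a b c Hb Hc; have [t [_ Ht]] := HU a.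
by rewrite -(Ht _ Hb) -(Ht _ Hc).
Qed.

Lemma idem_mul {S : countType} {mul : S -> S -> S} :
  (forall a b c, mul a (mul b c) = mul (mul a b) c) ->
  (forall s, exists! t, is_inverse mul s t) ->
  forall e f, mul e e = e -> mul f f = f -> mul (mul e f) (mul e f) = mul e f.
Proof.
move=> HA HU e f He Hf.
have idl : forall g x, mul g g = g -> mul g (mul g x) = mul g x.
  by move=> g x Hg; rewrite HA Hg.
have [b [[H1 H2] _]] := HU (mul e f).
have Hc : is_inverse mul (mul e f) (mul f (mul b e)).
  split.
    transitivity (mul (mul (mul e f) b) (mul e f)); last by [].
    rewrite -!HA (idl f) // (idl e) //.
  transitivity (mul f (mul (mul (mul b (mul e f)) b) e)); last by rewrite H2.
  rewrite -!HA (idl f) // (idl e) //.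
have Ecb := inv_uniq HU _ _ _ Hc (conj H1 H2).
have Hbb : mul b b = b.
  rewrite -{1 2 3}Ecb.
  transitivity (mul f (mul (mul (mul b (mul e f)) b) e)); last by rewrite H2.
  by rewrite -!HA.
have Eab : mul e f = b.
  apply: (inv_uniq HU b); first by split.
  by split; rewrite !Hbb.
by rewrite Eab.
Qed.

Lemma idem_comm {S : countType} {mul : S -> S -> S} :
  (forall a b c, mul a (mul b c) = mul (mul a b) c) ->
  (forall s, exists! t, is_inverse mul s t) ->
  forall e f, mul e e = e -> mul f f = f -> mul e f = mul f e.
Proof.
move=> HA HU e f He Hf.
have idl : forall g x, mul g g = g -> mul g (mul g x) = mul g x.
  by move=> g x Hg; rewrite HA Hg.
have Hef := idem_mul HA HU _ _ He Hf.
have Hfe := idem_mul HA HU _ _ Hf He.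
apply: (inv_uniq HU (mul e f)).
  by split; rewrite Hef.
split.
  transitivity (mul (mul e f) (mul e f)); last by [].
  by rewrite -!HA (idl f) // (idl e).
transitivity (mul (mul f e) (mul f e)); last by [].
by rewrite -!HA (idl e) // (idl f).
Qed.

Lemma proj_idem {S : countType} {mul : S -> S -> S} :
  (forall a b c, mul a (mul b c) = mul (mul a b) c) ->
  forall e, is_projection mul e -> mul e e = e.
Proof.
move=> HA e [s [t [[H1 H2] ->]]].
by rewrite HA H2.
Qed.

Lemma chain {S : countType} {mul : S -> S -> S} :
  (forall a b c, mul a (mul b c) = mul (mul a b) c) ->
  (forall s, exists! t, is_inverse mul s t) ->
  (forall e, is_projection mul e -> exists g, is_projection mul g /\ proj_le mul g e /\ g <> e) ->
  forall f, is_projection mul f -> forall n,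
  exists L b, [/\ is_projection mul b, mul b f = b, size L = n /\ uniq L, b \notin L &
     forall g, g \in L -> [/\ is_projection mul g, mul g f = g & mul b g = b]].
Proof.
move=> HA HU noMin f Pf; elim=> [|n [L [b [Pb bf [sL uL] bL HL]]]].
  exists [::], f; split => //; exact: proj_idem.
have [g' [Pg' [g'b g'nb]]] := noMin b Pb.
rewrite /proj_le in g'b.
have comm : forall u v, is_projection mul u -> is_projection mul v -> mul u v = mul v u.
  by move=> u v Pu Pv; apply: (idem_comm HA HU); apply: proj_idem.
exists (b :: L), g'; split => //=.
- by rewrite -g'b -HA bf.
- by rewrite sL bL uL.
- rewrite in_cons negb_or; apply/andP; split; first by apply/eqP.
  apply/negP => /HL [Pg _ bg']; apply: g'nb.
  by rewrite -g'b comm.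
- move=> g; rewrite in_cons => /orP[/eqP->|/HL [Pg gf bg]]; first by [].
  by split => //; rewrite -{1}g'b -HA bg g'b.
Qed.

Lemma big_inv {S : countType} {mul : S -> S -> S} :
  (forall a b c, mul a (mul b c) = mul (mul a b) c) ->
  (forall s, exists! t, is_inverse mul s t) ->
  (forall e, is_projection mul e -> exists g, is_projection mul g /\ proj_le mul g e /\ g <> e) ->
  forall (calF F0 : seq S), F0 <> [::] ->
  (forall s y, s \in calF -> y \in F0 -> mul s y \in F0) ->
  forall n, exists G, [/\ uniq G, n < size G &
    forall s y, s \in calF -> y \in G -> mul s y \in G].
Proof.
move=> HA HU noMin calF F0 F0n HF0 n.
case: F0 F0n HF0 => [//|x F1] _ HF0.
have [t [Ht _]] := HU x.
have Pf : is_projection mul (mul t x) by exists x, t.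
have [L [b [_ _ [sL uL] _ HL]]] := chain HA HU noMin _ Pf n.+1.
exists (undup [seq mul y g | y <- x :: F1, g <- L]); split.
- exact: undup_uniq.
- rewrite -sL -(size_map (mul x)); apply: uniq_leq_size.
    rewrite map_inj_in_uniq // => g1 g2 /HL [P1 f1 _] /HL [P2 f2 _] E.
    have E' : mul t (mul x g1) = mul t (mul x g2) by rewrite E.
    rewrite !HA in E'.
    have comm : forall g, is_projection mul g -> mul g (mul t x) = g -> mul (mul t x) g = g.
      move=> g Pg gf; rewrite -{2}gf; apply: (idem_comm HA HU); exact: proj_idem.
    by rewrite -(comm _ P1 f1) E' comm.
  move=> z /mapP [g gL ->]; rewrite mem_undup; exact: (allpairs_f mul (mem_head _ _) gL).
- move=> s z sF; rewrite !mem_undup => /allpairsP [[y g] /= [yF gL ->]].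
  by rewrite HA; apply: (allpairs_f mul (HF0 _ _ sF yF) gL).
Qed.
Lemma card_inv {S : countType} (mul : S -> S -> S) s G :
  uniq G -> (forall y, y \in G -> mul s y \in G) -> card_sF_U_F mul s G = size G.
Proof.
move=> uG HG; rewrite /card_sF_U_F; apply/eqP; rewrite eqn_leq; apply/andP; split.
  apply: uniq_leq_size; first exact: undup_uniq.
  move=> z; rewrite mem_undup mem_cat => /orP[/mapP[y yG ->]|//]; exact: HG.
apply: uniq_leq_size => // z zG; by rewrite mem_undup mem_cat zG orbT.
Qed.

Lemma card_sub {S : countType} (mul : S -> S -> S) s G :
  uniq G -> card_sF_U_F mul s G <= size G -> forall y, y \in G -> mul s y \in G.
Proof.
move=> uG Hc y yG.
have sub : {subset G <= undup (map (mul s) G ++ G)}.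
  by move=> z zG; rewrite mem_undup mem_cat zG orbT.
have [_ E] := uniq_min_size uG sub Hc.
by rewrite E mem_undup mem_cat map_f.
Qed.

Lemma card_add {S : countType} (mul : S -> S -> S) s G A :
  card_sF_U_F mul s (undup (G ++ A)) <= card_sF_U_F mul s G + 2 * size A.
Proof.
rewrite /card_sF_U_F.
apply: (@leq_trans (size (undup (map (mul s) G ++ G) ++ (map (mul s) A ++ A)))).
  apply: uniq_leq_size; first exact: undup_uniq.
  move=> z zi; rewrite !mem_cat mem_undup mem_cat.
  move: zi; rewrite mem_undup mem_cat => /orP[/mapP[y yi ->]| zi].
    move: yi; rewrite mem_undup mem_cat => /orP[] yi.
      by rewrite (map_f _ yi).
    by rewrite (map_f _ yi) ?orbT.
  by move: zi; rewrite mem_undup mem_cat => /orP[]->; rewrite ?orbT.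
by rewrite size_cat size_cat size_map addnn -mul2n.
Qed.

Import Order.TTheory GRing.Theory Num.Theory.

Theorem mainTheorem12 (S : countType) (mul : S -> S -> S) :
  inverse_semigroup mul ->
  folner_condition mul ->
  ~ proper_folner_condition mul ->
  exists e0 : S, minimal_projection mul e0.
Proof.
move=> [HA HU] Fol nP.
apply: NNPP => noE; apply: nP.
have noMin : forall e, is_projection mul e ->
    exists g, is_projection mul g /\ proj_le mul g e /\ g <> e.
  move=> e Pe; apply: NNPP => H; apply: noE; exists e; split => // f Pf fe.
  by apply: NNPP => fne; apply: H; exists f.
move=> eps heps calF A.
set a := size A.
pose x : rat := ((4 * a + 2)%:R / eps)%R.
have x0 : (0 <= x)%R by rewrite Num.Theory.divr_ge0 // ltW.
have hx := Num.Theory.archi_boundP x0.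
set N := Num.bound x in hx.
have hN : ((4 * a%:R + 2) < eps * N%:R)%R.
  have : (((4 * a + 2)%:R / eps) * eps < N%:R * eps)%R.
    by rewrite Num.Theory.ltr_pM2r.
  rewrite GRing.mulfVK ?gt_eqF // GRing.natrD GRing.natrM => h.
  by rewrite (GRing.mulrC eps).
pose eps' : rat := ((N.+1)%:R^-1)%R.
have hN1 : (0 < (N.+1)%:R :> rat)%R by rewrite Num.Theory.ltr0n.
have hr : (eps' * (N.+1)%:R = 1)%R by rewrite GRing.mulVf ?gt_eqF.
have hr0 : (0 < eps')%R by rewrite Num.Theory.invr_gt0.
have [F0 [uF0 [F0n HF0]]] := Fol eps' hr0 calF.
have [G [uG Gn NG HG]] : exists G, [/\ uniq G, G <> [::], (N <= size G)%N &
    forall s, s \in calF ->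
    ((card_sF_U_F mul s G)%:R <= (1 + eps / 2) * (size G)%:R :> rat)%R].
  case: (leqP N (size F0)) => hF0.
    exists F0; split => // s sF.
    apply: le_trans (HF0 s sF) _.
    have hk : (0 <= (size F0)%:R :> rat)%R by [].
    have hNk : ((N%:R : rat) <= (size F0)%:R)%R by rewrite Num.Theory.ler_nat.
    have e1 : ((N.+1)%:R = N%:R + 1 :> rat)%R by rewrite -GRing.natr1.
    have ha : (0 <= a%:R :> rat)%R by [].
    rewrite e1 in hr.
    have : (eps' <= eps / 2)%R by nra.
    move=> h; nra.
  have inv : forall s y, s \in calF -> y \in F0 -> mul s y \in F0.
    move=> s y sF; apply: card_sub => //.
    have h := HF0 s sF.
    have hk : (0 <= (size F0)%:R :> rat)%R by [].
    have hNk : (((size F0).+1)%:R <= (N.+1)%:R :> rat)%R by rewrite Num.Theory.ler_nat ltnS ltnW.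
    have e1 : (((size F0).+1)%:R = (size F0)%:R + 1 :> rat)%R by rewrite -GRing.natr1.
    have : ((card_sF_U_F mul s F0)%:R < (size F0).+1%:R :> rat)%R by nra.
    by rewrite Num.Theory.ltr_nat.
  have [G [uG NG HG]] := big_inv HA HU noMin _ _ F0n inv N.
  exists G; split => //; first by case: G NG {uG HG}.
    exact: ltnW.
  move=> s sF; rewrite card_inv //; last by move=> y; apply: HG.
  have hk : (0 <= (size G)%:R :> rat)%R by [].
  nra.
exists (undup (G ++ A)); split; last first.
  by move=> z zA; rewrite mem_undup mem_cat zA orbT.
have sGF : (size G <= size (undup (G ++ A)))%N.
  by apply: uniq_leq_size => // z zG; rewrite mem_undup mem_cat zG.
split; first exact: undup_uniq.
split; first by move=> E; move: sGF; rewrite E {E}; case: G Gn {uG HG NG}.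
move=> s sF.
have h1 := card_add mul s G A.
have h1' : ((card_sF_U_F mul s (undup (G ++ A)))%:R <=
           (card_sF_U_F mul s G)%:R + 2 * a%:R :> rat)%R.
  have := h1; rewrite -(Num.Theory.ler_nat rat) GRing.natrD GRing.natrM.
  by [].
have h2 := HG s sF.
have hg : ((N%:R : rat) <= (size G)%:R)%R by rewrite Num.Theory.ler_nat.
have hf : (((size G)%:R : rat) <= (size (undup (G ++ A)))%:R)%R by rewrite Num.Theory.ler_nat.
nra.
Qed.
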